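(* Let $B\ge 1$, let $D$ be any distribution on $\mathscr{X}\times\{\pm1\}$, let $\rho\in[0,1/2)$, and let $s\in\mathscr{F}_B=\{s:\mathscr{X}\to[-B,B]\}$ be any (measurable) scorer. Then, with $\ell=\ell^{\mathrm{unh}}$, $$\mathrm{regret}^{D}_{01}(s)\;\le\;\mathrm{regret}^{D,\mathscr{F}_B}_{\ell}(s)\;=\;\frac{1}{1-2\rho}\cdot\mathrm{regret}^{\mathrm{SLN}(D,\rho),\mathscr{F}_B}_{\ell}(s).$$
   Context: The unhinged loss is $\ell^{\mathrm{unh}}(y,v)=1-yv$ for $y\in\{\pm1\}$, $v\in\mathbb{R}$. For a loss $\ell$, distribution $D$ and function class $\mathscr{F}$, the $\ell$-risk is $\mathbb{L}^D_\ell(s)=\mathbb{E}_{(\mathsf{X},\mathsf{Y})\sim D}[\ell(\mathsf{Y},s(\mathsf{X}))]$ and the restricted regret is $\mathrm{regret}^{D,\mathscr{F}}_\ell(s)=\mathbb{L}^D_\ell(s)-\inf_{t\in\mathscr{F}}\mathbb{L}^D_\ell(t)$. The zero-one loss is $\ell^{01}(y,v)=\mathbb{1}[yv<0]+\tfrac12\mathbb{1}[v=0]$ and $\mathrm{regret}^D_{01}(s)=\mathrm{regret}^{D,\mathbb{R}^{\mathscr{X}}}_{\ell^{01}}(s)$ (infimum over all measurable scorers). For $\rho\in[0,1/2)$, $\mathrm{SLN}(D,\rho)$ is the distribution with the same marginal on $\mathscr{X}$ as $D$ in which each label of $D$ is independently flipped with probability $\rho$; its class-probability function is $\bar\eta(x)=(1-2\rho)\eta(x)+\rho$.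 *)

(* Defs.v *)
From Stdlib Require Import Reals Lra ClassicalEpsilon.
Open Scope R_scope.
Set Implicit Arguments.

Definition bounded {X : Type} (f : X -> R) : Prop :=
  exists M, forall x, Rabs (f x) <= M.

(* An expectation operator (integral w.r.t. a probability) on X:
   a normalised, monotone, linear functional on bounded functions. *)
Record Expectation (X : Type) := {
  Ex : (X -> R) -> R;
  Ex_add : forall f g, bounded f -> bounded g ->
      Ex (fun x => f x + g x) = Ex f + Ex g;
  Ex_scal : forall (c : R) f, bounded f -> Ex (fun x => c * f x) = c * Ex f;
  Ex_mono : forall f g, bounded f -> bounded g ->
      (forall x, f x <= g x) -> Ex f <= Ex g;
  Ex_const : forall c : R, Ex (fun _ => c) = c
}.

(* A distribution D on X x {+1,-1}, given by its marginal on X and its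
   class-probability function eta(x) = P(Y = 1 | X = x). *)
Record Dist (X : Type) := mkDist {
  marg : Expectation X;
  eta : X -> R
}.

Definition valid_dist {X : Type} (D : Dist X) : Prop :=
  forall x, 0 <= eta D x <= 1.

Definition SLN {X : Type} (D : Dist X) (rho : R) : Dist X :=
  mkDist (marg D) (fun x => (1 - 2 * rho) * eta D x + rho).

(* losses l(y, v), y in {+1,-1} *)
Definition loss := R -> R -> R.
Definition unhinged : loss := fun y v => 1 - y * v.
Definition zero_one : loss := fun y v =>
  (if Rlt_dec (y * v) 0 then 1 else 0) + / 2 * (if Req_EM_T v 0 then 1 else 0).

(* l-risk E_{(X,Y)~D}[ l(Y, s(X)) ] *)
Definition risk {X : Type} (l : loss) (D : Dist X) (s : X -> R) : R :=
  Ex (marg D) (fun x => eta D x * l 1 (s x) + (1 - eta D x) * l (-1) (s x)).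

Definition is_glb (S : R -> Prop) (m : R) : Prop :=
  (forall r, S r -> m <= r) /\ (forall m', (forall r, S r -> m' <= r) -> m' <= m).
Definition Rinf (S : R -> Prop) : R :=
  epsilon (inhabits 0) (fun m => is_glb S m).

Definition regret {X : Type} (l : loss) (D : Dist X) (F : (X -> R) -> Prop)
    (s : X -> R) : R :=
  risk l D s - Rinf (fun r => exists t, F t /\ r = risk l D t).

Definition all_scorers {X : Type} : (X -> R) -> Prop := fun _ => True.
Definition regret01 {X : Type} (D : Dist X) (s : X -> R) : R :=
  regret zero_one D all_scorers s.

Definition FB {X : Type} (B : R) : (X -> R) -> Prop :=
  fun s => forall x, - B <= s x <= B.

(* Main.v *)
From Pilot Require Import Defs.
From Stdlib Require Import Reals.
From Stdlib Require Import Lra Psatz ClassicalEpsilon FunctionalExtensionality.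
Open Scope R_scope.

Lemma bnd {X : Type} (f : X -> R) (M : R) : (forall x, - M <= f x <= M) -> @Pilot.Defs.bounded X f.
Proof. intros H; exists M; intros x; apply Rabs_le; apply H. Qed.

Lemma Ex_ext {X : Type} (E : Expectation X) f g : (forall x, f x = g x) -> Ex E f = Ex E g.
Proof. intros H; f_equal; apply functional_extensionality; auto. Qed.

Lemma Ex_sub {X : Type} (E : Expectation X) (f g : X -> R) : Pilot.Defs.bounded f -> Pilot.Defs.bounded g ->
  Ex E (fun x => f x - g x) = Ex E f - Ex E g.
Proof.
  intros hf hg.
  assert (hg' : Pilot.Defs.bounded (fun x => -1 * g x)).
  { destruct hg as [M hM]; exists M; intros x. rewrite Rabs_mult. replace (Rabs (-1)) with 1 by (unfold Rabs; destruct Rcase_abs; lra). specialize (hM x); lra. }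
  transitivity (Ex E (fun x => f x + (fun x => -1 * g x) x)).
  { apply Ex_ext; intros; simpl; ring. }
  rewrite Ex_add by auto. rewrite Ex_scal by auto. ring.
Qed.

Lemma Rinf_eq (S : R -> Prop) m : (forall r, S r -> m <= r) -> S m -> Rinf S = m.
Proof.
  intros H1 H2.
  assert (G : is_glb S m) by (split; auto).
  unfold Rinf.
  assert (G' := epsilon_spec (inhabits 0) (fun m => is_glb S m) (ex_intro _ m G)).
  simpl in G'. destruct G as [A1 A2], G' as [B1 B2].
  apply Rle_antisym; [apply A2; auto | apply B2; auto].
Qed.

Section S.
Context {X : Type}.

Lemma risk_unh (D : Dist X) t (M : R) : valid_dist D -> (forall x, -M <= t x <= M) ->
  risk unhinged D t = 1 + Ex (marg D) (fun x => (1 - 2 * eta D x) * t x).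
Proof.
  intros hD ht. unfold risk, unhinged.
  assert (bt : Pilot.Defs.bounded (fun x => (1 - 2 * eta D x) * t x)).
  { apply (bnd _ (1 * Rabs M)); intros x. specialize (ht x); specialize (hD x).
    assert (M >= 0) by lra. unfold Rabs; destruct (Rcase_abs M); [lra|].
    split; nra. }
  transitivity (Ex (marg D) (fun x => (fun _ => 1) x + (fun x => (1 - 2 * eta D x) * t x) x)).
  { apply Ex_ext; intros; simpl; ring. }
  rewrite Ex_add, Ex_const; auto.
  apply (bnd _ 1); intros; lra.
Qed.

End S.

Section S2.
Context {X : Type}.
Definition tstar (D : Dist X) (B : R) x := if Rle_dec 0 (1 - 2 * eta D x) then - B else B.

Lemma inf_unh (D : Dist X) B : valid_dist D -> 1 <= B ->
  Rinf (fun r => exists t, FB B t /\ r = risk unhinged D t)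
  = 1 + Ex (marg D) (fun x => - B * Rabs (1 - 2 * eta D x)).
Proof.
  intros hD hB.
  assert (E0 : risk unhinged D (tstar D B) = 1 + Ex (marg D) (fun x => - B * Rabs (1 - 2 * eta D x))).
  { rewrite (risk_unh D _ B) by (auto; intros x; unfold tstar; destruct Rle_dec; lra).
    f_equal. apply Ex_ext; intros x; unfold tstar; destruct Rle_dec.
    - rewrite Rabs_right by lra; ring.
    - rewrite Rabs_left by lra; ring. }
  apply Rinf_eq.
  - intros r [t [ht ->]]. rewrite (risk_unh D t B) by auto.
    apply Rplus_le_compat_l. apply Ex_mono.
    + apply (bnd _ (B * 1)); intros x; specialize (hD x).
      unfold Rabs; destruct Rcase_abs; nra.
    + apply (bnd _ (B * 1)); intros x; specialize (hD x); specialize (ht x); nra.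
    + intros x; specialize (hD x); specialize (ht x).
      unfold Rabs; destruct Rcase_abs; nra.
  - exists (tstar D B); split; [|auto].
    intros x; unfold tstar; destruct Rle_dec; lra.
Qed.

Lemma regret_unh (D : Dist X) B s : valid_dist D -> 1 <= B -> FB B s ->
  regret unhinged D (FB B) s =
  Ex (marg D) (fun x => (1 - 2 * eta D x) * s x) - Ex (marg D) (fun x => - B * Rabs (1 - 2 * eta D x)).
Proof.
  intros hD hB hs. unfold regret. rewrite inf_unh by auto.
  rewrite (risk_unh D s B) by auto. ring.
Qed.

End S2.

Definition z01 (e v : R) := e * zero_one 1 v + (1 - e) * zero_one (-1) v.
Definition w0 (e : R) := if Rle_dec e (/2) then -1 else 1.

Lemma z01_ge e v : 0 <= e <= 1 -> z01 e (w0 e) <= z01 e v.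
Proof.
  intros he. unfold z01, w0, zero_one.
  destruct (Rle_dec e (/2));
  repeat (destruct Rlt_dec); repeat (destruct Req_EM_T); lra.
Qed.

Lemma z01_key e v B : 0 <= e <= 1 -> 1 <= B -> -B <= v <= B ->
  z01 e v - z01 e (w0 e) <= (1 - 2 * e) * v - - B * Rabs (1 - 2 * e).
Proof.
  intros he hB hv. unfold z01, w0, zero_one.
  unfold Rabs; destruct Rcase_abs;
  destruct (Rle_dec e (/2));
  repeat (destruct Rlt_dec); repeat (destruct Req_EM_T); subst; nra.
Qed.

Lemma z01_bnd e v : 0 <= e <= 1 -> - 1 <= z01 e v <= 1.
Proof.
  intros he. unfold z01, zero_one.
  repeat (destruct Rlt_dec); repeat (destruct Req_EM_T); nra.
Qed.

Theorem mainTheorem4 (X : Type) (D : Dist X) (B rho : R) (s : X -> R)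
  (hD : valid_dist D) (hB : 1 <= B) (hrho : 0 <= rho < / 2)
  (hs : FB B s) :
  regret01 D s <= regret unhinged D (FB B) s /\
  regret unhinged D (FB B) s
    = / (1 - 2 * rho) * regret unhinged (SLN D rho) (FB B) s.
Proof.
  assert (hSLN : valid_dist (SLN D rho)).
  { intros x; simpl; specialize (hD x); nra. }
  assert (b1 : Pilot.Defs.bounded (fun x => (1 - 2 * eta D x) * s x)).
  { apply (bnd _ (B * 1)); intros x; specialize (hD x); specialize (hs x); nra. }
  assert (b2 : Pilot.Defs.bounded (fun x => - B * Rabs (1 - 2 * eta D x))).
  { apply (bnd _ (B * 1)); intros x; specialize (hD x); unfold Rabs; destruct Rcase_abs; nra. }
  split.
  - rewrite regret_unh by auto. unfold regret01, regret.
    assert (Ei : Rinf (fun r => exists t, all_scorers t /\ r = risk zero_one D t)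
                 = Ex (marg D) (fun x => z01 (eta D x) (w0 (eta D x)))).
    { apply Rinf_eq.
      - intros r [t [_ ->]]. unfold risk. apply Ex_mono.
        + apply (bnd _ 1); intros x; apply z01_bnd; auto.
        + apply (bnd _ 1); intros x; apply (z01_bnd (eta D x) (t x)); auto.
        + intros x; apply (z01_ge (eta D x) (t x)); auto.
      - exists (fun x => w0 (eta D x)); split; [exact I|]. reflexivity. }
    rewrite Ei. unfold risk.
    change (Ex (marg D) (fun x => z01 (eta D x) (s x)) -
            Ex (marg D) (fun x => z01 (eta D x) (w0 (eta D x))) <=
            Ex (marg D) (fun x => (1 - 2 * eta D x) * s x) -
            Ex (marg D) (fun x => - B * Rabs (1 - 2 * eta D x))).
    rewrite <- !Ex_sub; auto.
    + apply Ex_mono.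
      * apply (bnd _ 2); intros x; pose proof (z01_bnd (eta D x) (s x) (hD x));
        pose proof (z01_bnd (eta D x) (w0 (eta D x)) (hD x)); lra.
      * apply (bnd _ (2 * B)); intros x; specialize (hD x); specialize (hs x);
        unfold Rabs; destruct Rcase_abs; nra.
      * intros x; apply z01_key; auto.
    + apply (bnd _ 1); intros x; apply z01_bnd; auto.
    + apply (bnd _ 1); intros x; apply z01_bnd; auto.
  - rewrite !regret_unh by auto. simpl.
    assert (e1 : Ex (marg D) (fun x => (1 - 2 * ((1 - 2 * rho) * eta D x + rho)) * s x)
               = (1 - 2 * rho) * Ex (marg D) (fun x => (1 - 2 * eta D x) * s x)).
    { rewrite <- Ex_scal by auto. apply Ex_ext; intros; ring. }
    assert (e2 : Ex (marg D) (fun x => - B * Rabs (1 - 2 * ((1 - 2 * rho) * eta D x + rho)))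
               = (1 - 2 * rho) * Ex (marg D) (fun x => - B * Rabs (1 - 2 * eta D x))).
    { rewrite <- Ex_scal by auto. apply Ex_ext; intros x.
      replace (1 - 2 * ((1 - 2 * rho) * eta D x + rho)) with ((1 - 2 * rho) * (1 - 2 * eta D x)) by ring.
      rewrite Rabs_mult, (Rabs_right (1 - 2 * rho)) by lra. ring. }
    rewrite e1, e2. field. lra.
Qed.
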